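(* Let $S$ be a semigroup of transformations of a finite set $\Omega$ with $|\Omega|=n$, and suppose $S$ contains a permutation group $G$ that is primitive on $\Omega$. Suppose the minimum rank of an element of $S$ is $r$, where $r>1$. Then there is no element of $S$ of rank greater than $r$ whose kernel partition has $r-1$ parts of size $n/r$.
   Context: The rank of a transformation $h$ is $|\Omega h|$; its kernel partition is the partition of $\Omega$ into the inverse images of the points of its image. A permutation group is primitive if it is transitive and preserves no equivalence relation other than equality and the universal relation. *)

(* Defs.v *)
From mathcomp Require Import all_boot all_fingroup primitive_action.
Set Implicit Arguments. Unset Strict Implicit. Unset Printing Implicit Defensive.

Definition trank (T : finType) (h : {ffun T -> T}) : nat := #|[set h x | x in T]|.

Definition is_semigroup (T : finType) (S : {set {ffun T -> T}}) : Prop :=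
  forall f g, f \in S -> g \in S -> [ffun x => g (f x)] \in S.

Definition kernel_class (T : finType) (h : {ffun T -> T}) (y : T) : {set T} :=
  [set x | h x == y].

(* number of parts of the kernel partition of h of size n/r, where n = |T|
   (a part of size k has size n/r iff r * k = n) *)
Definition nparts_size_n_over_r (T : finType) (h : {ffun T -> T}) (r : nat) : nat :=
  #|[set y in [set h x | x in T] | r * #|kernel_class h y| == #|T|]|.

(* Main.v *)
Require Import Defs.
From mathcomp Require Import all_boot all_fingroup primitive_action.
From mathcomp Require Import gseries.
Set Implicit Arguments. Unset Strict Implicit. Unset Printing Implicit Defensive.

Lemma prim_contra (T : finType) (G : {group {perm T}}) (eT : eqType) (F : T -> eT) :
  [primitive G, on [set: T] | 'P] ->
  (forall a x y, a \in G -> F x = F y -> F (a x) = F (a y)) ->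
  forall z0 z u v, z0 != z -> F z0 = F z -> F u <> F v -> False.
Proof.
move=> primG inv z0 z u v nz Fz Fuv.
have trG : [transitive G, on [set: T] | 'P] by case/andP: primG.
have tr x y : exists2 g, g \in G & g x = y.
  have [g Gg ->] := atransP2 trG (in_setT x) (in_setT y); exists g => //.
have inv2 a x y : a \in G -> (F (a x) == F (a y)) = (F x == F y).
  move=> Ga; apply/eqP/eqP; last exact: inv.
  move=> E; have := inv _ _ _ (groupVr Ga) E; by rewrite !permK.
move: primG; rewrite (trans_prim_astab (in_setT z0) trG) => /maximal_eqP[_ maxC].
pose C := [set y | F y == F z0].
have memH a : a \in G -> (a \in ('N_G(C | 'P))%g) = (F (a z0) == F z0).
  move=> Ga; rewrite inE Ga /=; apply/astabsP/idP => [H | E x].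
    by have := H z0; rewrite !inE eqxx /= => ->.
  by rewrite !inE /= -[aperm x a]/(a x) -{1}(eqP E) inv2.
have [] := maxC ('N_G(C | 'P))%G.
- apply/subsetP => b /setIP[Gb /astab1P] /= bz.
  by rewrite memH // -[b z0]/(aperm z0 b) bz.
- exact: subsetIl.
- move=> /= E; have [g Gg gz] := tr z0 z.
  have : g \in ('N_G(C | 'P))%g by rewrite memH // gz Fz.
  rewrite E => /setIP[_ /astab1P] /=; rewrite -[aperm z0 g]/(g z0) gz => E'.
  by rewrite E' eqxx in nz.
- move=> /= E.
  have [w Fw] : exists w, F w != F z0.
    case: (eqVneq (F u) (F z0)) => [Eu|]; last by exists u.
    exists v; rewrite -Eu; apply/eqP => E'; exact: Fuv.
  have [g Gg gz] := tr z0 w.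
  have : g \in G by [].
  rewrite -E memH // gz; by rewrite (negbTE Fw).
Qed.


Theorem theorem12 (T : finType) (S : {set {ffun T -> T}}) (G : {group {perm T}})
    (r : nat) :
  is_semigroup S ->
  (forall g, g \in G -> [ffun x => g x] \in S) ->
  [primitive G, on [set: T] | 'P] ->
  (exists2 h, h \in S & trank h = r) ->
  (forall h, h \in S -> r <= trank h) ->
  1 < r ->
  ~ (exists2 h, h \in S & r < trank h /\ nparts_size_n_over_r h r = r.-1).
Proof.
move=> semS GS primG [f Sf rf] minr r1 [h Sh [rh nh]].
pose comp (f k : {ffun T -> T}) := [ffun x => k (f x)].
have Sc s k : s \in S -> k \in S -> comp s k \in S by move=> *; apply: semS.
pose pf (g : {perm T}) : {ffun T -> T} := [ffun x => g x].
have pfE g x : pf g x = g x by rewrite ffunE.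
pose A := [set f x | x in T].
have cardA : #|A| = r by [].
have inj (k : T -> T) : (exists2 s, s \in S & forall x, s x = k (f x)) -> {in A &, injective k}.
  move=> [s Ss sE]; apply/imset_injP; rewrite eqn_leq leq_imset_card cardA.
  have := minr s Ss; rewrite /trank.
  have -> : [set s x | x in T] = k @: A.
    by rewrite -imset_comp; apply: eq_imset => x; rewrite sE.
  done.
have trG : [transitive G, on [set: T] | 'P] by case/andP: primG.
have tr x y : exists2 g, g \in G & g x = y.
  have [g Gg ->] := atransP2 trG (in_setT x) (in_setT y); by exists g.
have injg g : g \in G -> {in A &, injective (fun a => h (g a))}.
  move=> Gg; apply: inj; exists (comp (comp f (pf g)) h).
    by apply: (Sc) => //; apply: (Sc) => //; apply: (GS).
  by move=> x; rewrite !ffunE.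
have injgg g g' : g \in G -> g' \in G -> {in A &, injective (fun a => f (g' (h (g a))))}.
  move=> Gg Gg'; apply: inj; exists (comp (comp (comp (comp f (pf g)) h) (pf g')) f).
    by apply: (Sc) => //; apply: (Sc); [apply: (Sc) => //; apply: (Sc) => //; apply: (GS) | apply: (GS)].
  by move=> x; rewrite !ffunE.
set n := #|T|.
set Y := [set y in [set h x | x in T] | r * #|kernel_class h y| == n].
have cardY : #|Y| = r.-1 by [].
pose U := [set x | h x \in Y].
have cardU : r * #|U| = r.-1 * n.
  have -> : #|U| = \sum_(y in Y) #|kernel_class h y|.
    rewrite -sum1_card (partition_big h (mem Y)) /=; last by move=> x; rewrite inE.
    apply: eq_bigr => y Yy; rewrite sum1dep_card; apply: eq_card => x.
    rewrite /kernel_class inE [in RHS]inE; case: (eqVneq (h x) y) => [hx|]; last by rewrite andbF.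
    by rewrite andbT inE hx.
  rewrite big_distrr /= -cardY -sum_nat_const; apply: eq_bigr => y.
  by rewrite inE => /andP[_ /eqP].
have n0 : 0 < n.
  apply: leq_trans (ltnW r1) _; rewrite -cardA; exact: max_card.
have stab a : n * #|('C_G[a | 'P])%g| = #|G|.
  by rewrite -(card_orbit_stab 'P G a) (atransP trG a (in_setT a)) cardsT.
have countG a : n * #|[set g in G | g a \in U]| = #|U| * #|G|.
  have -> : #|[set g in G | g a \in U]| = \sum_(u in U) #|('C_G[a | 'P])%g|.
    rewrite -sum1dep_card (partition_big (fun g : {perm T} => g a) (mem U)) /=; last by move=> g /andP[].
    apply: eq_bigr => u Uu; have [g Gg gu] := tr a u.
    have E := @amove_act _ _ _ 'P G a (subsetT _) g Gg.
    rewrite sum1dep_card -(card_rcoset ('C_G[a | 'P])%g g) -E.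
    apply: eq_card => x; rewrite /amove !inE /= -[aperm a g]/(g a) -[aperm a x]/(x a) gu.
    case: (x \in G) => //=; case: (eqVneq (x a) u) => [xu|]; rewrite ?andbF ?andbT //.
    by move: Uu; rewrite xu !inE.
  by rewrite sum_nat_const mulnCA stab.
pose c (g : {perm T}) := #|[set a in A | g a \in U]|.
have cle g : g \in G -> c g <= r.-1.
  move=> Gg; rewrite -cardY /c -(card_in_imset (f := fun a => h (g a))); last first.
    by move=> x y /setIdP[Ax _] /setIdP[Ay _]; apply: injg.
  apply: subset_leq_card; apply/subsetP => _ /imsetP[a /setIdP[_ Ua] ->].
  by rewrite inE in Ua.
have sumc : \sum_(g in G) c g = \sum_(g in G) r.-1.
  have -> : \sum_(g in G) c g = \sum_(a in A) #|[set g in G | g a \in U]|.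
    transitivity (\sum_(g in G) \sum_(a in A) (if g a \in U then 1 else 0)).
      apply: eq_bigr => g _; rewrite /c -sum1dep_card big_mkcondr /=.
      by apply: eq_bigl => a.
    rewrite exchange_big /=; apply: eq_bigr => a _.
    by rewrite -sum1dep_card big_mkcondr.
  apply/eqP; rewrite -(eqn_pmul2l n0) big_distrr /=.
  rewrite (eq_bigr (fun _ => #|U| * #|G|)); last by move=> a _; rewrite countG.
  by rewrite !sum_nat_const cardA mulnA cardU mulnAC mulnC [r.-1 * _]mulnC.
have ceq g : g \in G -> c g = r.-1.
  move=> Gg.
  have H := @leqif_sum _ (fun g => g \in G) (fun g => c g == r.-1) c (fun _ => r.-1)
     (fun g Gg => leqif_eq (cle g Gg)).
  have := H.2; rewrite sumc eqxx => /esym /forall_inP /(_ g Gg) /eqP; done.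
have [a0 Aa0 a0U] : exists2 a0, a0 \in A & a0 \notin U.
  case: (set_0Vmem (A :\: U)) => [E|[a0]]; last by rewrite inE => /andP[? ?]; exists a0.
  have sAU : A \subset U by rewrite -setD_eq0 E.
  have := ceq 1%g (group1 G); rewrite /c.
  have -> : [set a in A | (1%g : {perm T}) a \in U] = A.
    apply/setP => a; rewrite inE perm1; case Aa: (a \in A) => //=.
    exact: (subsetP sAU).
  by rewrite cardA; case: (r) r1 => // r' _ /eqP; rewrite eqn_leq ltnn.
have [w Yw wz] : exists2 w, h w \notin Y & h w != h a0.
  case: (set_0Vmem ([set h x | x in T] :\: (h a0 |: Y))) => [E|[y]]; last first.
    rewrite !inE negb_or => /andP[/andP[ya Yy] /imsetP[w _ yw]].
    by exists w; rewrite -yw // inE.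
  have : trank h <= r.
    have sub : [set h x | x in T] \subset h a0 |: Y by rewrite -setD_eq0 E.
    apply: leq_trans (subset_leq_card sub) _.
    by rewrite cardsU1 cardY; case: (r) r1 => // r'; case: (_ \notin _).
  by rewrite leqNgt rh.
have [g1 Gg1 g1a] := tr a0 w.
have key g g' a : g \in G -> g' \in G -> a \in A -> g a \notin U ->
    f (g' (h (g a))) \in A :\: [set f (g' y) | y in Y] /\
    #|[set f (g' y) | y in Y]| = r.-1 /\ [set f (g' y) | y in Y] \subset A.
  move=> Gg Gg' Aa gaU.
  pose AU := [set a in A | g a \in U].
  have sAU : AU \subset A by apply/subsetP => x /setIdP[].
  have YE : [set h (g a) | a in AU] = Y.
    apply/eqP; rewrite eqEcard; apply/andP; split.
      apply/subsetP => _ /imsetP[x /setIdP[_ Ux] ->]; by rewrite inE in Ux.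
    rewrite card_in_imset; first by rewrite cardY -[#|AU|]/(c g) ceq.
    by move=> x y /(subsetP sAU) Ax /(subsetP sAU) Ay; apply: injg.
  have WE : [set f (g' y) | y in Y] = [set f (g' (h (g a))) | a in AU].
    by rewrite -YE -imset_comp.
  have injU : {in AU &, injective (fun a => f (g' (h (g a))))}.
    by move=> x y /(subsetP sAU) Ax /(subsetP sAU) Ay; apply: injgg.
  have inA x : f x \in A by apply: imset_f.
  rewrite WE card_in_imset // -[#|AU|]/(c g) ceq //; split; last split => //.
    rewrite inE inA andbT; apply/imsetP => [[x AUx E]].
    have := injgg g g' Gg Gg' a x Aa (subsetP sAU x AUx) E => ax.
    by move: AUx; rewrite -ax inE (negbTE gaU) andbF.
  by apply/subsetP => _ /imsetP[x _ ->].
have rel g' : g' \in G -> f (g' (h a0)) = f (g' (h w)).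
  move=> Gg'.
  have n1 : (1%g : {perm T}) a0 \notin U by rewrite perm1.
  have n2 : g1 a0 \notin U by rewrite g1a inE.
  have [k1 [cW sW]] := key 1%g g' a0 (group1 G) Gg' Aa0 n1.
  have [k2 _] := key g1 g' a0 Gg1 Gg' Aa0 n2.
  rewrite perm1 in k1; rewrite g1a in k2.
  have : #|A :\: [set f (g' y) | y in Y]| <= 1.
    by rewrite cardsDS // cardA cW; case: (r) r1 => // r'; rewrite subSn // subnn.
  by move/card_le1_eqP => /(_ _ _ k1 k2).
have [x [y [Ax Ay xy]]] : exists x y, [/\ x \in A, y \in A & x != y].
  by apply/card_gt1P; rewrite cardA.
move: xy; case/imsetP: Ax => u _ ->; case/imsetP: Ay => v _ -> xy.
pose F x := [ffun g : {perm T} => if g \in G then Some (f (g x)) else None].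
apply: (@prim_contra T G _ F primG _ (h a0) (h w) u v).
- move=> a x1 y1 Ga E; apply/ffunP => g; rewrite !ffunE; case: ifP => Gg //.
  have := congr1 (fun K : {ffun {perm T} -> option T} => K (a * g)%g) E; rewrite !ffunE groupM // !permM.
  by case=> ->.
- by rewrite eq_sym.
- by apply/ffunP => g; rewrite !ffunE; case: ifP => Gg //; rewrite rel.
- move=> E; have := congr1 (fun K : {ffun {perm T} -> option T} => K 1%g) E; rewrite !ffunE group1 !perm1.
  by case=> fuv; rewrite fuv eqxx in xy.
Qed.
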